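(* Let $\mathcal{X}$ be a set of nonempty causally complete open subsets of $\mathbb{R}^{1+s}$ satisfying the following two properties: ($\mathbf{c2}_1$) for any $X\in\mathcal{X}$ and $X_0\in\mathcal{X}$ with $X_0\subset X$, there exists $X_{00}\in\mathcal{X}$ with $X_{00}\subset X_0$ such that $\mathcal{X}(X\cap X_{00}')$ is nonempty and connected; ($\mathbf{c2}_2$) for any $X\in\mathcal{X}$ and $X_1,X_2\in\mathcal{X}$ with $X_1,X_2\subset X$, there exist $X_{10},X_{20}\in\mathcal{X}$ with $X_{10}\subset X_1$, $X_{20}\subset X_2$ such that $\mathcal{X}(X\cap X_{10}'\cap X_{20}')$ is nonempty. Then for every $X\in\mathcal{X}$ the set $\mathcal{X}^{(2)}_\times(X)$ is nonempty and connected.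
   Context: $R'$ denotes the causal complement of $R\subset\mathbb{R}^{1+s}$; $X_1\perp X_2$ (causal disjointness) means $(x_1-x_2)^2<0$ for all $x_1\in X_1,x_2\in X_2$ (Minkowski metric with signature $(+,-,\dots,-)$). For $R\subset\mathbb{R}^{1+s}$: $\mathcal{X}(R)=\{X\in\mathcal{X}: X\subset R\}$, half-ordered by inclusion, and $\mathcal{X}^{(2)}_\times(R)=\{(X_1,X_2)\in\mathcal{X}(R)\times\mathcal{X}(R): X_1\perp X_2\}$, half-ordered by componentwise inclusion. A path of length $N$ in a half-ordered set $(A,\subset)$ is a sequence $a_0,\dots,a_N\in A$ with $a_{j-1}\subset a_j$ or $a_j\subset a_{j-1}$ for each $j$; $A$ is connected if any two of its elements are joined by a path of finite length. *)

(* Defs.v *)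
From HB Require Import structures.
From mathcomp Require Import all_boot all_order all_algebra.
From mathcomp Require Import all_classical all_reals all_analysis.
From mathcomp Require Import Rstruct Rstruct_topology.
From Stdlib Require Import Rdefinitions.
Set Implicit Arguments. Unset Strict Implicit. Unset Printing Implicit Defensive.
Import Order.TTheory GRing.Theory Num.Theory.
Local Open Scope classical_set_scope.
Local Open Scope ring_scope.

(* Points of Minkowski space R^{1+s}: row vectors of length s+1, index 0 = time. *)
Notation mpt s := 'rV[R]_(s.+1).

Definition mink (s : nat) (v : mpt s) : R :=
  v ord0 ord0 ^+ 2 - \sum_(i < s) v ord0 (lift ord0 i) ^+ 2.

Definition ccompl (s : nat) (A : set (mpt s)) : set (mpt s) :=
  [set x | forall y, A y -> mink (x - y) < 0].

Definition cperp (s : nat) (A B : set (mpt s)) : Prop :=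
  forall x1 x2, A x1 -> B x2 -> mink (x1 - x2) < 0.

Definition causally_complete (s : nat) (A : set (mpt s)) : Prop :=
  ccompl (ccompl A) = A.

Definition Xin (s : nat) (XX : set (set (mpt s))) (A : set (mpt s)) :
  set (set (mpt s)) := [set Y | XX Y /\ Y `<=` A].

Definition X2in (s : nat) (XX : set (set (mpt s))) (A : set (mpt s)) :
  set (set (mpt s) * set (mpt s)) :=
  [set p | XX p.1 /\ XX p.2 /\ p.1 `<=` A /\ p.2 `<=` A /\ cperp p.1 p.2].

Definition pair_incl (s : nat) (p q : set (mpt s) * set (mpt s)) : Prop :=
  p.1 `<=` q.1 /\ p.2 `<=` q.2.

Definition hconnected (T : Type) (le : T -> T -> Prop) (A : set T) : Prop :=
  forall a b, A a -> A b ->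
    exists (N : nat) (f : nat -> T),
      f 0%N = a /\ f N = b /\ (forall j : nat, leq j N -> A (f j)) /\
      (forall j : nat, ltn 0 j -> leq j N -> le (f j.-1) (f j) \/ le (f j) (f j.-1)).

(* Main.v *)
Require Import Defs.
From HB Require Import structures.
From mathcomp Require Import all_boot all_order all_algebra.
From mathcomp Require Import all_classical all_reals all_analysis.
From mathcomp Require Import Rstruct Rstruct_topology.
From Stdlib Require Import Rdefinitions.
From mathcomp Require Import zify.
Local Open Scope classical_set_scope.

Definition conn (T : Type) (le : T -> T -> Prop) (A : set T) (a b : T) : Prop :=
  exists (N : nat) (f : nat -> T),
      f 0%N = a /\ f N = b /\ (forall j : nat, leq j N -> A (f j)) /\
      (forall j : nat, (0 < j)%N -> (j <= N)%N -> le (f j.-1) (f j) \/ le (f j) (f j.-1)).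
Arguments conn {T}.

Lemma conn_step T le (A : set T) a b : A a -> A b -> le a b \/ le b a -> conn le A a b.
Proof.
move=> Aa Ab H; exists 1%N, (fun j => if j == 0%N then a else b).
split=> //; split=> //; split; first by case=> [|[]].
by case=> [|[|]].
Qed.

Lemma conn_refl T le (A : set T) a : A a -> conn le A a a.
Proof.
move=> Aa; exists 0%N, (fun _ => a); split=> //; split=> //; split=> //.
by case.
Qed.

Lemma conn_trans T le (A : set T) a b c : conn le A a b -> conn le A b c -> conn le A a c.
Proof.
move=> [N1 [f1 [f10 [f1N [f1A f1s]]]]] [N2 [f2 [f20 [f2N [f2A f2s]]]]].
exists (N1 + N2)%N, (fun j => if (j <= N1)%N then f1 j else f2 (j - N1)%N).
split; first by rewrite leq0n.
split.
  case: (leqP (N1 + N2) N1) => h; last by rewrite addKn.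
  have E : N2 = 0%N by lia.
  by subst N2; rewrite addn0 f1N -f20.
split.
  move=> j hj; case: leqP => h; first exact: f1A.
  apply: f2A; lia.
move=> j j0 jN; case: (leqP j N1) => h.
  have -> : (j.-1 <= N1)%N by lia.
  exact: f1s.
have E1 : (if (j.-1 <= N1)%N then f1 j.-1 else f2 (j.-1 - N1)%N) = f2 (j - N1)%N.-1.
  case: leqP => h'.
    have -> : j.-1 = N1 by lia.
    have -> : (j - N1)%N.-1 = 0%N by lia.
    by rewrite f1N f20.
  congr f2; lia.
rewrite E1; apply: f2s; lia.
Qed.

Lemma conn_sym T le (A : set T) a b : conn le A a b -> conn le A b a.
Proof.
move=> [N [f [f0 [fN [fA fs]]]]].
exists N, (fun j => f (N - j)%N).
split; first by rewrite subn0.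
split; first by rewrite subnn.
split; first by move=> j _; apply: fA; lia.
move=> j j0 jN.
have := fs (N - j).+1 isT; rewrite /=.
have -> : (N - j.-1)%N = (N - j).+1 by lia.
move=> H; have := H ltac:(lia); tauto.
Qed.

Lemma conn_map T U (le : T -> T -> Prop) (le' : U -> U -> Prop) (A : set T) (A' : set U)
  (g : T -> U) a b :
  (forall x, A x -> A' (g x)) -> (forall x y, A x -> A y -> le x y -> le' (g x) (g y)) ->
  conn le A a b -> conn le' A' (g a) (g b).
Proof.
move=> gA gl [N [f [f0 [fN [fA fs]]]]].
exists N, (g \o f); split; first by rewrite /= f0.
split; first by rewrite /= fN.
split; first by move=> j hj; apply: gA; apply: fA.
move=> j j0 jN; have jN' : (j.-1 <= N)%N by lia.
by case: (fs j j0 jN) => H; [left|right]; apply: gl => //; apply: fA.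
Qed.

Section MS.
Local Open Scope ring_scope.
Lemma mink_sym (s : nat) (x y : mpt s) : mink (x - y) = mink (y - x).
Proof.
have -> : y - x = - (x - y) by rewrite GRing.opprB.
rewrite /mink !mxE (GRing.sqrrN (x ord0 ord0 - y ord0 ord0)); congr (_ - _).
apply: eq_bigr => i _; rewrite [in RHS]mxE; symmetry; exact: GRing.sqrrN.
Qed.

End MS.


Lemma cperp_sym s (A B : set (mpt s)) : cperp A B -> cperp B A.
Proof. by move=> H x1 x2 h1 h2; rewrite mink_sym; exact: H. Qed.
Arguments cperp_sym {s A B}.

Theorem proposition3p3 (s : nat) (XX : set (set (mpt s)))
  (HX : forall X, XX X -> X !=set0 /\ causally_complete X /\ open X)
  (c21 : forall X X0, XX X -> XX X0 -> X0 `<=` X ->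
     exists X00, XX X00 /\ X00 `<=` X0 /\
       Xin XX (X `&` ccompl X00) !=set0 /\
       hconnected (@subset (mpt s)) (Xin XX (X `&` ccompl X00)))
  (c22 : forall X X1 X2, XX X -> XX X1 -> XX X2 -> X1 `<=` X -> X2 `<=` X ->
     exists X10 X20, XX X10 /\ XX X20 /\ X10 `<=` X1 /\ X20 `<=` X2 /\
       Xin XX (X `&` ccompl X10 `&` ccompl X20) !=set0) :
  forall X, XX X ->
    X2in XX X !=set0 /\ hconnected (@pair_incl s) (X2in XX X).
Proof.
move=> X XXX.
split.
  have [X00 [XX00 [sub [[Y [XY sY]] _]]]] := c21 X X XXX XXX (@subset_refl _ X).
  exists (Y, X00); split=> //; split=> //; split; first by move=> y /sY [].
  split; first by move=> y /sub.
  by move=> x1 x2 /sY [_ h] h2; apply: h.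
have same2 : forall A A' B, X2in XX X (A, B) -> X2in XX X (A', B) ->
    conn (@pair_incl s) (X2in XX X) (A, B) (A', B).
  move=> A A' B [XA [XB [AX [BX pAB]]]] [XA' [_ [A'X [_ pA'B]]]].
  have [B0 [XB0 [sB0 [_ hc]]]] := c21 X B XXX XB BX.
  have inB0 : forall Z, XX Z -> Z `<=` X -> cperp Z B -> Xin XX (X `&` ccompl B0) Z.
    move=> Z XZ ZX pZ; split=> // z zZ; split; first exact: ZX.
    by move=> y /sB0 yB; apply: pZ.
  have pin : forall Z, Xin XX (X `&` ccompl B0) Z -> X2in XX X (Z, B0).
    move=> Z [XZ sZ]; split=> //; split=> //; split; first by move=> z /sZ [].
    split; first by move=> y /sB0 /BX.
    by move=> x1 x2 /sZ [_ h] h2; apply: h.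
  apply: (@conn_trans _ _ _ _ (A, B0)).
    apply: conn_step; first by split.
      exact: pin (inB0 _ XA AX pAB).
    by right; split=> //=.
  apply: (@conn_trans _ _ _ _ (A', B0)); last first.
    apply: conn_step; first exact: pin (inB0 _ XA' A'X pA'B).
      by split.
    by left; split=> //=.
  apply: (@conn_map _ _ (@subset _) _ (Xin XX (X `&` ccompl B0)) _ (fun Z => (Z, B0))).
  - exact: pin.
  - by move=> x y _ _ h; split.
  - by apply: hc; [exact: inB0 XA AX pAB | exact: inB0 XA' A'X pA'B].
have same1 : forall A B B', X2in XX X (A, B) -> X2in XX X (A, B') ->
    conn (@pair_incl s) (X2in XX X) (A, B) (A, B').
  move=> A B B' [XA [XB [AX [BX pAB]]]] [_ [XB' [_ [B'X pAB']]]].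
  have [A0 [XA0 [sA0 [_ hc]]]] := c21 X A XXX XA AX.
  have inA0 : forall Z, XX Z -> Z `<=` X -> cperp A Z -> Xin XX (X `&` ccompl A0) Z.
    move=> Z XZ ZX pZ; split=> // z zZ; split; first exact: ZX.
    by move=> y /sA0 yA; exact: (cperp_sym pZ z y zZ yA).
  have pin : forall Z, Xin XX (X `&` ccompl A0) Z -> X2in XX X (A0, Z).
    move=> Z [XZ sZ]; split=> //; split=> //; split; first by move=> y /sA0 /AX.
    split; first by move=> z /sZ [].
    by apply: cperp_sym => x1 x2 /sZ [_ h] h2; apply: h.
  apply: (@conn_trans _ _ _ _ (A0, B)).
    apply: conn_step; first by split.
      exact: pin (inA0 _ XB BX pAB).
    by right; split=> //=.
  apply: (@conn_trans _ _ _ _ (A0, B')); last first.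
    apply: conn_step; first exact: pin (inA0 _ XB' B'X pAB').
      by split.
    by left; split=> //=.
  apply: (@conn_map _ _ (@subset _) _ (Xin XX (X `&` ccompl A0)) _ (fun Z => (A0, Z))).
  - exact: pin.
  - by move=> x y _ _ h; split.
  - by apply: hc; [exact: inA0 XB BX pAB | exact: inA0 XB' B'X pAB'].
move=> [X1 X2] [Y1 Y2] [XX1 [XX2 [X1X [X2X pX]]]] [XY1 [XY2 [Y1X [Y2X pY]]]].
have [X20 [Y20 [XX20 [XY20 [sX20 [sY20 [Z [XZ sZ]]]]]]]] := c22 X X2 Y2 XXX XX2 XY2 X2X Y2X.
have ZX : Z `<=` X by move=> z /sZ [[]].
have Zin1 : X2in XX X (Z, X20).
  split=> //; split=> //; split=> //; split; first by move=> z /sX20 /X2X.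
  by move=> x1 x2 /sZ [[_ h] _] h2; apply: h.
have Zin2 : X2in XX X (Z, Y20).
  split=> //; split=> //; split=> //; split; first by move=> z /sY20 /Y2X.
  by move=> x1 x2 /sZ [_ h] h2; apply: h.
have Xin1 : X2in XX X (X1, X20).
  split=> //; split=> //; split=> //; split; first by move=> z /sX20 /X2X.
  by move=> x1 x2 h1 /sX20 h2; apply: pX.
have Yin1 : X2in XX X (Y1, Y20).
  split=> //; split=> //; split=> //; split; first by move=> z /sY20 /Y2X.
  by move=> x1 x2 h1 /sY20 h2; apply: pY.
have XinA : X2in XX X (X1, X2) by [].
have YinA : X2in XX X (Y1, Y2) by [].
apply: (@conn_trans _ _ _ _ (X1, X20)).
  by apply: conn_step => //; right; split.
apply: (@conn_trans _ _ _ _ (Z, X20)); first exact: same2.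
apply: (@conn_trans _ _ _ _ (Z, Y20)); first exact: same1.
apply: (@conn_trans _ _ _ _ (Y1, Y20)); first exact: same2.
by apply: conn_step => //; left; split.
Qed.
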